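(* Let $a$ and $w$ be non-negative integers and let $f:\mathbb{N}\to\mathbb{N}$ be an arbitrary non-decreasing function. There exist integers $w_0$ and $n_0$ such that the following holds. If a graph $G$ has a proper path decomposition of interior width at most $w$, adhesion at most $a$, and order at least $n_0$, then for some $w'\le w_0$ and $p\le a$, $G$ also has a $p$-linked proper path decomposition of interior width at most $w'$ and order at least $f(w')$.
   Context: A path decomposition of a graph $G$ is a pair $(P,\beta)$ where $P$ is a path and $\beta$ assigns to each node of $P$ a subset (bag) of $V(G)$ such that every edge of $G$ has both ends in some bag and for every vertex $v$ the nodes whose bags contain $v$ form a non-empty subpath of $P$. Let $s,t$ be the first and last nodes of $P$. For a node $x\neq s$ let $l(x)$ be the preceding node and $L(x)=\beta(l(x))\cap\beta(x)$; for $x\neq t$ let $r(x)$ be the following node and $R(x)=\beta(r(x))\cap\beta(x)$. The decomposition is proper if $\beta(x)\not\subseteq\beta(y)$ for all distinct nodes $x,y$. Its interior width is the maximum of $|\beta(x)|-1$ over nodes $x\notin\{s,t\}$. Its adhesion is the maximum of $|\beta(x)\cap\beta(y)|$ over adjacent nodes $x,y$ of $P$. It is $p$-linked if $|L(x)|=p$ for all $x\neq s$ and $G$ contains $p$ pairwise vertex-disjoint paths from $R(s)$ to $L(t)$. Its order is $|V(P)|$. *)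

(* Defs.v *)
From mathcomp Require Import all_boot.
Set Implicit Arguments. Unset Strict Implicit. Unset Printing Implicit Defensive.

Definition simple_graph (T : finType) (e : rel T) : Prop :=
  symmetric e /\ irreflexive e.

(* A path decomposition (P, beta) is represented by the sequence of bags
   B = [:: beta(x_0); ...; beta(x_{n-1})] along the path P = x_0 ... x_{n-1};
   the order is size B.  The i-th bag is [bag B i]. *)
Definition bag (T : finType) (B : seq {set T}) (i : nat) : {set T} :=
  nth set0 B i.

Definition is_path_decomposition (T : finType) (e : rel T) (B : seq {set T}) : Prop :=
  0 < size B /\
  (forall x y, e x y -> exists2 i, i < size B & (x \in bag B i) && (y \in bag B i)) /\
  (forall v, exists2 i, i < size B & v \in bag B i) /\
  (forall v i j k, i <= j -> j <= k -> k < size B ->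
      v \in bag B i -> v \in bag B k -> v \in bag B j).

Definition proper_pd (T : finType) (B : seq {set T}) : Prop :=
  forall i j, i < size B -> j < size B -> i <> j -> ~~ (bag B i \subset bag B j).

(* interior width at most w: |beta(x)| - 1 <= w for all nodes x other than s, t *)
Definition interior_width_le (T : finType) (B : seq {set T}) (w : nat) : Prop :=
  forall i, 0 < i -> i < (size B).-1 -> #|bag B i| <= w.+1.

Definition adhesion_le (T : finType) (B : seq {set T}) (a : nat) : Prop :=
  forall i, i.+1 < size B -> #|bag B i :&: bag B i.+1| <= a.

(* R(s) and L(t); these are only defined when the path has at least two
   nodes; by convention they are empty otherwise. *)
Definition Rs (T : finType) (B : seq {set T}) : {set T} :=
  if 1 < size B then bag B 0 :&: bag B 1 else set0.
Definition Lt (T : finType) (B : seq {set T}) : {set T} :=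
  if 1 < size B then bag B (size B).-2 :&: bag B (size B).-1 else set0.

Definition gpath (T : finType) (e : rel T) (P : seq T) : bool :=
  if P is x :: r then path e x r && uniq P else false.

Definition starts_in (T : finType) (P : seq T) (A : {set T}) : bool :=
  if P is x :: _ then x \in A else false.
Definition ends_in (T : finType) (P : seq T) (A : {set T}) : bool :=
  if P is x :: r then last x r \in A else false.

Definition disjoint_paths (T : finType) (e : rel T) (p : nat) (A C : {set T}) : Prop :=
  exists Q : 'I_p -> seq T,
    (forall k, [&& gpath e (Q k), starts_in (Q k) A & ends_in (Q k) C]) /\
    (forall k l, k <> l -> forall v, v \in Q k -> v \notin Q l).

Definition p_linked (T : finType) (e : rel T) (B : seq {set T}) (p : nat) : Prop :=
  (forall i, 0 < i -> i < size B -> #|bag B i.-1 :&: bag B i| = p) /\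
  disjoint_paths e p (Rs B) (Lt B).

(* Main.v *)
Require Import Defs.
From mathcomp Require Import all_boot zify.
From Stdlib Require Import Classical ClassicalEpsilon.
Set Implicit Arguments. Unset Strict Implicit. Unset Printing Implicit Defensive.

Section Basics.
Variable T : finType.

Definition sep (e : rel T) (X A C : {set T}) : Prop :=
  forall P, gpath e P -> starts_in P A -> ends_in P C -> exists2 v, v \in P & v \in X.

Definition rZ (r : rel T) (Z : {set T}) : rel T :=
  [rel x y | [&& r x y, x \notin Z & y \notin Z]].

Lemma ends_rcons (s : seq T) x A : ends_in (rcons s x) A = (x \in A).
Proof. by case: s => [|h t] //=; rewrite last_rcons. Qed.

Lemma rev_cons_last (x : T) p : rev (x :: p) = last x p :: rev (belast x p).
Proof. by rewrite lastI rev_rcons. Qed.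

Lemma gpath_rev (r : rel T) (P : seq T) : symmetric r -> gpath r P -> gpath r (rev P).
Proof.
move=> sr; case: P => [|x p] //= /andP [hp hu].
have hu' : uniq (rev (x :: p)) by rewrite rev_uniq.
move: hu'; rewrite rev_cons_last /= => ->; rewrite andbT rev_path.
by rewrite (eq_path (e' := r)) // => a b; rewrite sr.
Qed.

Lemma starts_rev (P : seq T) (A : {set T}) : starts_in (rev P) A = ends_in P A.
Proof. by case: P => [|x p] //; rewrite rev_cons_last. Qed.

Lemma ends_rev (P : seq T) (A : {set T}) : ends_in (rev P) A = starts_in P A.
Proof. by case: P => [|x p] //; rewrite rev_cons ends_rcons. Qed.

Lemma sep_sym (r : rel T) (X A C : {set T}) : symmetric r -> sep r X A C -> sep r X C A.
Proof.
move=> sr hs P gP sP eP.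
have [v hv hx] : exists2 v, v \in rev P & v \in X.
  by apply: hs; [exact: gpath_rev | rewrite starts_rev | rewrite ends_rev].
by rewrite mem_rev in hv; exists v.
Qed.

Lemma gpath_sub (r r' : rel T) (P : seq T) : subrel r r' -> gpath r P -> gpath r' P.
Proof. by move=> sub; case: P => // x p /= /andP [hp ->]; rewrite (sub_path sub hp). Qed.

Lemma path_rZ_notin (r : rel T) (Z : {set T}) (x : T) (p : seq T) : x \notin Z -> path (rZ r Z) x p -> all (fun z => z \notin Z) (x :: p).
Proof.
elim: p x => [|y p IH] x hx /=; first by rewrite hx.
by case/andP => /and3P [_ _ hy] hp; rewrite hx; exact: (IH y hy hp).
Qed.

Lemma connect_rZ_notin (r : rel T) (Z : {set T}) (x z : T) : x \notin Z -> connect (rZ r Z) x z -> z \notin Z.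
Proof.
move=> hx /connectP [p hp ->]; have := path_rZ_notin hx hp.
by move/allP; apply; apply: mem_last.
Qed.

Lemma path_connect_rZ (r : rel T) (Z : {set T}) (x : T) (p : seq T) : path r x p -> all (fun z => z \notin Z) (x :: p) ->
  forall z, z \in x :: p -> connect (rZ r Z) x z.
Proof.
elim: p x => [|y p IH] x /=.
  by move=> _ _ z; rewrite inE => /eqP ->; apply: connect0.
case/andP=> hxy hp /and3P [hx hy hall] z; rewrite inE => /orP [/eqP -> | hz].
  exact: connect0.
apply: (connect_trans (connect1 (_ : rZ r Z x y))); first by rewrite /rZ /= hxy hx hy.
by apply: IH => //=; rewrite hy.
Qed.

Lemma sep_connect (r : rel T) (Z A C : {set T}) (a c : T) : sep r Z A C -> a \in A -> c \in C -> a \notin Z ->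
  connect (rZ r Z) a c -> False.
Proof.
move=> hs ha hc haZ /connectP [p hp hcl]; rewrite hcl in hc; move: hc.
case: (shortenP hp) => p' hp' hu hsub hc.
have hall := path_rZ_notin haZ hp'.
have [v hv hvZ] : exists2 v, v \in a :: p' & v \in Z.
  apply: hs => //=.
  rewrite -/(uniq (a :: p')) hu andbT; apply: sub_path hp' => x y /and3P [] //.
by move/allP: hall => /(_ v hv); rewrite hvZ.
Qed.

Lemma walk_closed (r : rel T) (Z R : {set T}) (h : T) (p : seq T) : path r h p ->
  all (fun z => z \notin Z) (h :: p) ->
  (forall z w, r z w -> z \notin Z -> w \notin Z -> z \in R -> w \in R) ->
  h \in R -> last h p \in R.
Proof.
elim: p h => [|y p IH] h //= /andP [hhy hp] /and3P [hh hy hall] cl hR.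
by apply: IH => //=; [rewrite hy | apply: (cl h y)].
Qed.

Definition Reach (r : rel T) (S A : {set T}) : {set T} :=
  [set z | [exists a in A, (a \notin S) && connect (rZ r S) a z]].

Lemma Reach_notin (r : rel T) (S A : {set T}) (z : T) : z \in Reach r S A -> z \notin S.
Proof.
by rewrite inE => /existsP [a /and3P [_ haS hc]]; apply: connect_rZ_notin hc.
Qed.

Lemma Reach_disj (r : rel T) (S A C : {set T}) (z : T) : symmetric r -> sep r S A C ->
  z \in Reach r S A -> z \in Reach r S C -> False.
Proof.
move=> sr hs; rewrite !inE => /existsP [a /and3P [ha haS hac]] /existsP [c /and3P [hc hcS hcc]].
apply: (sep_connect hs ha hc haS); apply: (connect_trans hac).
rewrite (sym_connect_sym _) // => x y; rewrite /rZ /= sr.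
by case: (r y x); case: (x \in S); case: (y \in S).
Qed.

End Basics.

Section Menger.
Variable T : finType.
Implicit Types (r e : rel T) (A C S X Y Z : {set T}) (P : seq T).

Lemma path_connect r (x : T) p z : path r x p -> z \in x :: p -> connect r x z.
Proof.
elim: p x => [|y p IH] x /=; first by move=> _; rewrite inE => /eqP ->; apply: connect0.
case/andP=> hxy hp; rewrite inE => /orP [/eqP -> | hz]; first exact: connect0.
exact: (connect_trans (connect1 hxy) (IH y hp hz)).
Qed.

Lemma rZ_sym r Z : symmetric r -> symmetric (rZ r Z).
Proof.
move=> sr x y; rewrite /rZ /= sr.
by case: (r y x); case: (x \in Z); case: (y \in Z).
Qed.

Lemma Reach_step r S A z w : z \in Reach r S A -> rZ r S z w -> w \in Reach r S A.
Proof.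
rewrite !inE => /existsP [a /and3P [ha haS hc]] hzw; apply/existsP; exists a.
by rewrite ha haS (connect_trans hc (connect1 hzw)).
Qed.

Lemma Reach_self r S A z : z \in A -> z \notin S -> z \in Reach r S A.
Proof. by move=> hz hzS; rewrite inE; apply/existsP; exists z; rewrite hz hzS connect0. Qed.

Lemma F2 (e e' : rel T) S A C (x y : T) : symmetric e' ->
  (forall z w, e' z w -> e z w) ->
  (forall z w, e z w -> ~~ e' z w -> ((z == x) && (w == y)) || ((z == y) && (w == x))) ->
  sep e' S A C -> x \in Reach e' S A -> y \in Reach e' S C ->
  forall Z, sep e' Z A (x |: S) -> sep e Z A C.
Proof.
move=> se' hsub hdel hS hx hy Z hZ P gP sP eP.
apply: NNPP => hn.
have hall : all (fun z => z \notin Z) P.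
  apply/allP => w hw; apply/negP => hwZ; apply: hn; by exists w.
clear hn; case: P gP sP eP hall => [|a p] //= /andP [hp hu] ha hc /andP [haZ hallp].
pose R := [set z | connect (rZ e' Z) a z].
have RX : forall z, z \in R -> z \notin x |: S.
  move=> z; rewrite inE => hz; apply/negP => hzX.
  exact: (sep_connect hZ ha hzX haZ hz).
have RRA : forall z, z \in R -> z \in Reach e' S A.
  move=> z; rewrite inE => /connectP [q hq ->].
  have haS : a \notin S.
    by have := RX a; rewrite inE connect0 in_setU1 negb_or => /(_ isT) /andP [].
  have hq' : path (rZ e' S) a q.
    apply: (sub_in_path (P := mem R)); last exact: hq.
      move=> z1 z2 h1 h2 /and3P [h12 _ _].
      move: (RX z1 h1) (RX z2 h2); rewrite !in_setU1 !negb_or => /andP [_ h1S] /andP [_ h2S].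
      by rewrite /rZ /= h12 h1S h2S.
    apply/allP => z3 hz3; change (z3 \in R); by rewrite inE (path_connect hq hz3).
  rewrite inE; apply/existsP; exists a; rewrite ha haS /=.
  exact: (path_connect hq' (mem_last a q)).
have cl : forall z w, e z w -> z \notin Z -> w \notin Z -> z \in R -> w \in R.
  move=> z w hzw hzZ hwZ hzR.
  case he' : (e' z w).
    rewrite inE; apply: (connect_trans (_ : connect _ a z)); first by rewrite inE in hzR.
    by apply: connect1; rewrite /rZ /= he' hzZ hwZ.
  have := hdel z w hzw; rewrite he' => /(_ isT) /orP [/andP [/eqP hzx _] | /andP [/eqP hzy _]].
    by move: (RX z hzR); rewrite hzx in_setU1 eqxx.
  exfalso; apply: (Reach_disj se' hS (RRA z hzR)); by rewrite hzy.
have hlast : last a p \in R.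
  apply: (walk_closed (r := e) (Z := Z)) => //=; first by rewrite haZ.
  by rewrite inE connect0.
have hlS : last a p \notin S.
  by move: (RX _ hlast); rewrite in_setU1 negb_or => /andP [].
apply: (Reach_disj se' hS (RRA _ hlast)); exact: Reach_self.
Qed.

End Menger.

Section Menger2.
Variable T : finType.
Implicit Types (r e : rel T) (A C S X Y Z : {set T}) (P : seq T).

Lemma orient (e e' : rel T) S A C (u v : T) : symmetric e' ->
  (forall z w, e' z w -> e z w) ->
  (forall z w, e z w -> ~~ e' z w -> ((z == u) && (w == v)) || ((z == v) && (w == u))) ->
  sep e' S A C -> ~ sep e S A C ->
  exists x y, [/\ ((x == u) && (y == v)) || ((x == v) && (y == u)),
     x \in Reach e' S A & y \in Reach e' S C].
Proof.
move=> se' hsub hdel hS hnS; apply: NNPP => hn; apply: hnS => P gP sP eP.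
apply: NNPP => hn2.
have hall : all (fun z => z \notin S) P.
  apply/allP => w hw; apply/negP => hwS; apply: hn2; by exists w.
clear hn2; case: P gP sP eP hall => [|a p] //= /andP [hp hu] ha hc /andP [haS hallp].
pose RA := Reach e' S A.
pose R2 := RA :|: [set z | ((u \in RA) && connect (rZ e' S) v z) || ((v \in RA) && connect (rZ e' S) u z)].
have memR2 : forall z, (z \in R2) = (z \in RA) || (((u \in RA) && connect (rZ e' S) v z) || ((v \in RA) && connect (rZ e' S) u z)).
  by move=> z; rewrite /R2 in_setU; congr orb; rewrite inE.
have cl : forall z w, e z w -> z \notin S -> w \notin S -> z \in R2 -> w \in R2.
  move=> z w hzw hzS hwS hz.
  case he' : (e' z w).
    have st : rZ e' S z w by rewrite /rZ /= he' hzS hwS.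
    move: hz; rewrite !memR2 => /orP [hz | /orP [/andP [hu' hc'] | /andP [hv' hc']]].
    - by rewrite (Reach_step hz st).
    - by rewrite hu' (connect_trans hc' (connect1 st)) orbT.
    - by rewrite hv' (connect_trans hc' (connect1 st)) !orbT.
  have := hdel z w hzw; rewrite he' => /(_ isT) /orP [/andP [/eqP hzu /eqP hwv] | /andP [/eqP hzv /eqP hwu]].
    subst z w; case hu' : (u \in RA); first by rewrite memR2 hu' connect0 orbT.
    by move: hz; rewrite !memR2 hu' /= => /andP [-> _].
  subst z w; case hv' : (v \in RA); first by rewrite memR2 hv' connect0 !orbT.
  by move: hz; rewrite !memR2 hv' /= orbF => /andP [-> _].
have hl : last a p \in R2.
  apply: (walk_closed (r := e) (Z := S)) => //=; first by rewrite haS.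
  by rewrite memR2 Reach_self.
have hlS : last a p \notin S.
  have : all (fun z => z \notin S) (a :: p) by rewrite /= haS.
  by move/allP => /(_ _ (mem_last a p)).
have hlC : last a p \in Reach e' S C by apply: Reach_self.
have csym := sym_connect_sym (rZ_sym S se').
move: hl; rewrite memR2 => /orP [hl | /orP [/andP [hu' hc'] | /andP [hv' hc']]].
- exact: (Reach_disj se' hS hl hlC).
- apply: hn; exists u, v; split => //; first by rewrite !eqxx.
  move: hlC; rewrite !inE => /existsP [c /and3P [hc1 hc2 hc3]]; apply/existsP; exists c.
  by rewrite hc1 hc2 (connect_trans hc3) // csym.
- apply: hn; exists v, u; split => //; first by rewrite !eqxx orbT.
  move: hlC; rewrite !inE => /existsP [c /and3P [hc1 hc2 hc3]]; apply/existsP; exists c.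
  by rewrite hc1 hc2 (connect_trans hc3) // csym.
Qed.

End Menger2.

Section Menger3.
Variable T : finType.
Implicit Types (r e : rel T) (A C S X Y Z : {set T}) (P : seq T).

Lemma gpath_prefix r (q s2 : seq T) (z : T) : gpath r (rcons q z ++ s2) -> gpath r (rcons q z).
Proof.
case: q => [|h t] //= /andP [hp hu].
move: hp; rewrite cat_path => /andP [-> _] /=.
have : uniq ((h :: rcons t z) ++ s2) by [].
by rewrite cat_uniq => /andP [].
Qed.

Lemma starts_prefix (q s2 : seq T) (z : T) A : starts_in (rcons q z ++ s2) A = starts_in (rcons q z) A.
Proof. by case: q. Qed.

Lemma trunc r A X P : gpath r P -> starts_in P A -> ends_in P X ->
  exists q z, [/\ gpath r (rcons q z), starts_in (rcons q z) A, z \in X,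
     all (fun w => w \notin X) q & {subset rcons q z <= P}].
Proof.
move=> gP sP eP.
have hP : has (fun w => w \in X) P.
  case: P gP sP eP => [|a p] // _ _ he; apply/hasP; exists (last a p) => //; exact: mem_last.
move: gP sP; case: (split_find hP) => z s1 s2 hz hn gP sP.
exists s1, z; split => //.
- exact: gpath_prefix gP.
- by rewrite -(starts_prefix s1 s2).
- by apply/allP => w hw; apply/negP => hwX; move/hasP: hn; apply; exists w.
- by move=> w hw; rewrite mem_cat hw.
Qed.

Lemma gcat r (h : T) t P2 : gpath r (h :: t) -> path r (last h t) P2 -> uniq P2 ->
  (forall w, w \in h :: t -> w \in P2 -> False) -> gpath r (h :: t ++ P2).
Proof.
move=> /andP [hp hu] hp2 hu2 hd; rewrite /gpath cat_path hp hp2 /=.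
change (uniq ((h :: t) ++ P2)).
rewrite cat_uniq hu hu2 /= andbT; apply/hasP => [[w hw1 hw2]].
exact: (hd w hw2 hw1).
Qed.

Lemma combine e (k : nat) A C S (x y : T) (Q1 Q2 : 'I_k -> seq T) :
 x \notin S -> y \notin S -> e x y -> #|y |: S| = k ->
 (forall i, exists q z, [/\ Q1 i = rcons q z, z \in x |: S & all (fun w => w \notin x |: S) q]) ->
 (forall i, gpath e (Q1 i) /\ starts_in (Q1 i) A) ->
 (forall i i', i <> i' -> forall w, w \in Q1 i -> w \notin Q1 i') ->
 (forall j, exists q z, [/\ Q2 j = z :: q, z \in y |: S & all (fun w => w \notin y |: S) q]) ->
 (forall j, gpath e (Q2 j) /\ ends_in (Q2 j) C) ->
 (forall j j', j <> j' -> forall w, w \in Q2 j -> w \notin Q2 j') ->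
 (forall i j w, w \in Q1 i -> w \in Q2 j -> w \notin S -> False) ->
 disjoint_paths e k A C.
Proof.
move=> hxS hyS exy hcard hQ1f hQ1g hQ1d hQ2f hQ2g hQ2d H12.
pose hd j := head x (Q2 j).
have hdY : forall j, hd j \in y |: S.
  by move=> j; rewrite /hd; have [q [z [-> hz _]]] := hQ2f j.
have hdin : forall j, hd j \in Q2 j.
  by move=> j; have [q [z [hq _ _]]] := hQ2f j; rewrite /hd hq /= mem_head.
have hd_inj : injective hd.
  move=> j j' hjj'; apply: NNPP => hne.
  by have := hQ2d j j' hne (hd j) (hdin j); rewrite hjj' hdin.
have surj : forall t, t \in y |: S -> exists j, hd j = t.
  have heq : hd @: [set: 'I_k] = y |: S.
    apply/eqP; rewrite eqEcard; apply/andP; split.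
      by apply/subsetP => t /imsetP [j _ ->].
    by rewrite card_imset // cardsT card_ord hcard.
  by move=> t; rewrite -heq => /imsetP [j _ ->]; exists j.
pose zi i := last x (Q1 i).
have zin : forall i, zi i \in Q1 i.
  by move=> i; have [q [z [hq _ _]]] := hQ1f i; rewrite /zi hq; case: q {hq} => [|a q] /=;
    [rewrite mem_head | rewrite -/(last a (rcons q z)) mem_last].
have ziX : forall i, zi i \in x |: S.
  by move=> i; have [q [z [hq hz _]]] := hQ1f i; rewrite /zi hq last_rcons.
have zi_inj : forall i i', zi i = zi i' -> i = i'.
  move=> i i' h; apply: NNPP => hne.
  by have := hQ1d i i' hne (zi i) (zin i); rewrite h zin.
pose tgt i := if zi i == x then y else zi i.
have tgtY : forall i, tgt i \in y |: S.
  move=> i; rewrite /tgt; case: ifP => [_|hne]; first by rewrite setU11.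
  by move: (ziX i); rewrite !in_setU1 hne /= => ->; rewrite orbT.
have tgt_inj : forall i i', tgt i = tgt i' -> i = i'.
  move=> i i'; rewrite /tgt; case: ifP => [/eqP h1|h1]; case: ifP => [/eqP h2|h2].
  - by move=> _; apply: zi_inj; rewrite h1 h2.
  - move=> hy; move: (ziX i'); rewrite in_setU1 h2 /= -hy => hyS'.
    by rewrite hyS' in hyS.
  - move=> hy; move: (ziX i); rewrite in_setU1 h1 /= hy => hyS'.
    by rewrite hyS' in hyS.
  - exact: zi_inj.
pose jf i := odflt i [pick j | hd j == tgt i].
have hjf : forall i, hd (jf i) = tgt i.
  move=> i; rewrite /jf; case: pickP => [j /eqP //| none].
  have [j hj] := surj _ (tgtY i); by move: (none j); rewrite hj eqxx.
have jf_inj : forall i i', jf i = jf i' -> i = i'.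
  by move=> i i' h; apply: tgt_inj; rewrite -!hjf h.
pose part i := if zi i == x then Q2 (jf i) else behead (Q2 (jf i)).
have part_sub : forall i w, w \in part i -> w \in Q2 (jf i).
  move=> i w; rewrite /part; case: ifP => // _.
  by have [q [z [-> _ _]]] := hQ2f (jf i) => /= hw; rewrite inE hw orbT.
have part_S : forall i w, w \in part i -> w \notin S.
  move=> i w; have [q [z [hq hz hall]]] := hQ2f (jf i).
  have hqS : forall w, w \in q -> w \notin S.
    by move=> w' hw'; move/allP: hall => /(_ w' hw'); rewrite in_setU1 negb_or => /andP [].
  rewrite /part hq; case: ifP => [hzx|_] /=; last exact: hqS.
  rewrite inE => /orP [/eqP -> | /hqS //].
  have := hjf i; rewrite /hd hq /= /tgt hzx => ->; exact: hyS.
pose Q i := Q1 i ++ part i.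
exists Q; split.
  move=> i; have [q1 [z1 [hq1 hz1 hall1]]] := hQ1f i.
  have [g1 s1] := hQ1g i.
  have [q2 [z2 [hq2 hz2 hall2]]] := hQ2f (jf i).
  have [g2 e2] := hQ2g (jf i).
  have hz2t : z2 = tgt i by move: (hjf i); rewrite /hd hq2.
  have hdisj : forall w, w \in Q1 i -> w \in part i -> False.
    move=> w hw1 hw2; exact: (H12 i (jf i) w hw1 (part_sub i w hw2) (part_S i w hw2)).
  have hzi : zi i = z1 by rewrite /zi hq1 last_rcons.
  have hP2 : [/\ path e z1 (part i), uniq (part i) & last z1 (part i) \in C].
    move: hz2t g2 e2; rewrite /part /tgt hzi hq2.
    case: ifP => [/eqP hx' -> | _ <-] /= /andP [hp hu].
      by rewrite hx' exy hp hu.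
    by move=> he; split => //; case/andP: hu.
  rewrite /Q; move: (part i) hP2 hdisj => P2 [hp2 hu2 hl2] hdisj.
  move: hdisj g1 s1; rewrite hq1.
  have [h [t [-> hl]]] : exists h t, rcons q1 z1 = h :: t /\ last h t = z1.
    case: (q1) => [|a q] /=; first by exists z1, [::].
    by exists a, (rcons q z1); rewrite last_rcons.
  move=> hdisj g1 s1; apply/and3P; split => //.
    apply: gcat g1 _ hu2 _; first by rewrite hl.
    by move=> w hw1 hw2; exact: hdisj w hw1 hw2.
  by rewrite /= last_cat hl.
move=> i i' hne w; rewrite /Q !mem_cat => /orP [hw | hw]; apply/negP => /orP [hw' | hw'].
- by move: (hQ1d i i' hne w hw); rewrite hw'.
- exact: (H12 i (jf i') w hw (part_sub i' w hw') (part_S i' w hw')).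
- exact: (H12 i' (jf i) w hw' (part_sub i w hw) (part_S i w hw)).
- have hj : jf i <> jf i' by move=> h; apply: hne; apply: jf_inj.
  by move: (hQ2d _ _ hj w (part_sub i w hw)); rewrite (part_sub i' w hw').
Qed.

End Menger3.

Section Menger4.
Variable T : finType.
Implicit Types (r e : rel T) (A C S X Y Z : {set T}) (P : seq T).

Lemma trunc_reach r S X A (q : seq T) (z : T) : S \subset X -> gpath r (rcons q z) ->
  starts_in (rcons q z) A -> all (fun w => w \notin X) q ->
  forall w, w \in rcons q z -> w \notin S -> w \in Reach r S A.
Proof.
move=> hSX; case: q => [|h t] /=.
  by move=> _ hz _ w; rewrite inE => /eqP -> hzS; apply: Reach_self.
move=> /andP [hp _] hh /andP [hhX hall] w.
have nS : forall w', w' \notin X -> w' \notin S.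
  by move=> w' hw'; apply/negP => hs; move/negP: hw'; apply; apply: (subsetP hSX).
have hallS : all (fun w => w \notin S) (h :: t).
  by rewrite /= nS //=; apply/allP => w' hw'; apply: nS; move/allP: hall; apply.
move: hp; rewrite rcons_path => /andP [hp hlz].
rewrite inE => /orP [/eqP -> | ]; first by move=> hS; apply: Reach_self.
rewrite mem_rcons inE => /orP [/eqP -> hzS | hw hwS].
  apply: (Reach_step (z := last h t)); last first.
    rewrite /rZ /= hlz hzS andbT; move/allP: hallS; apply; exact: mem_last.
  rewrite inE; apply/existsP; exists h; rewrite hh (nS _ hhX) /=.
  exact: path_connect_rZ hp hallS _ (mem_last h t).
rewrite inE; apply/existsP; exists h; rewrite hh (nS _ hhX) /=.
by apply: path_connect_rZ hp hallS _ _; rewrite inE hw orbT.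
Qed.

Lemma fchoice (k : nat) (Pr : 'I_k -> seq T -> Prop) :
  (forall i, exists s, Pr i s) -> exists f : 'I_k -> seq T, forall i, Pr i (f i).
Proof.
move=> H; exists (fun i => proj1_sig (constructive_indefinite_description _ (H i))).
by move=> i; case: (constructive_indefinite_description _ (H i)).
Qed.

Lemma menger_noedge e k A C : (forall x y, ~~ e x y) ->
  (forall X, sep e X A C -> k <= #|X|) -> disjoint_paths e k A C.
Proof.
move=> hne hs.
have hk : k <= #|A :&: C|.
  apply: hs => [[|x [|y p]]] //=.
    by move=> _ hx hc; exists x; rewrite ?inE ?hx ?hc.
  by rewrite (negbTE (hne x y)).
exists (fun i => [:: enum_val (A := A :&: C) (widen_ord hk i)]); split.
  by move=> i /=; have := enum_valP (A := A :&: C) (widen_ord hk i); rewrite inE => /andP [-> ->].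
move=> i j hij v; rewrite !inE => /eqP -> ; apply/negP => /eqP h.
by apply: hij; move/enum_val_inj: h => /(congr1 val) /= /val_inj.
Qed.

Definition del_edge e (u v : T) : rel T :=
  [rel x y | e x y && ~~ (((x == u) && (y == v)) || ((x == v) && (y == u)))].

Lemma menger e : symmetric e -> forall k A C,
  (forall X, sep e X A C -> k <= #|X|) -> disjoint_paths e k A C.
Proof.
move=> se0 k0 A0 C0 hs0; move: e se0 k0 A0 C0 hs0.
suff H : forall n e, #|[set p : T * T | e p.1 p.2]| <= n -> symmetric e -> forall k A C,
  (forall X, sep e X A C -> k <= #|X|) -> disjoint_paths e k A C.
  by move=> e0 se0; apply: (H _ e0 (leqnn _) se0).
elim=> [|n IH] e he se k A C hs.
  apply: menger_noedge hs => x y; apply/negP => exy.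
  by move: he; rewrite leqn0 => /eqP /cards0_eq /setP /(_ (x, y)); rewrite !inE exy.
case: (pickP (fun p : T * T => e p.1 p.2)) => [[u v] /= euv | none]; last first.
  by apply: menger_noedge hs => x y; apply/negP => exy; move: (none (x, y)); rewrite /= exy.
pose e' := del_edge e u v.
have se' : symmetric e'.
  move=> x y; rewrite /e' /del_edge /= se; congr andb.
  by case: (x == u); case: (x == v); case: (y == u); case: (y == v).
have hsub : forall z w, e' z w -> e z w by move=> z w /andP [].
have hdel : forall z w, e z w -> ~~ e' z w -> ((z == u) && (w == v)) || ((z == v) && (w == u)).
  by move=> z w hzw; rewrite /e' /del_edge /= hzw /= negbK.
have he' : #|[set p : T * T | e' p.1 p.2]| <= n.
  rewrite -ltnS; apply: leq_trans he; apply: proper_card; apply/properP; split.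
    by apply/subsetP => p; rewrite !inE => /hsub.
  exists (u, v); rewrite !inE /=; first exact: euv.
  by rewrite /e' /del_edge /= !eqxx euv.
case: (classic (forall X, sep e' X A C -> k <= #|X|)) => [h | h].
  have [Q [hQ hd]] := IH e' he' se' k A C h.
  exists Q; split => // i; case/and3P: (hQ i) => g s t; rewrite s t andbT.
  by rewrite andbT; exact: (gpath_sub hsub g).
have [S hS0] := not_all_ex_not _ _ h.
have [hS hlt0] := imply_to_and _ _ hS0.
have hlt : #|S| < k by rewrite ltnNge; apply/negP.
have hnS : ~ sep e S A C by move=> h0; move: (hs S h0); rewrite leqNgt hlt.
have [x [y [hxy hxA hyC]]] := orient se' hsub hdel hS hnS.
have hdel' : forall z w, e z w -> ~~ e' z w -> ((z == x) && (w == y)) || ((z == y) && (w == x)).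
  move=> z w hzw hn; move: (hdel z w hzw hn) hxy.
  by case/orP=> /andP [/eqP -> /eqP ->] /orP [/andP [/eqP -> /eqP ->] | /andP [/eqP -> /eqP ->]];
    rewrite !eqxx ?orbT.
have exy : e x y.
  by case/orP: hxy => /andP [/eqP -> /eqP ->] //; rewrite se.
have HX := F2 se' hsub hdel' hS hxA hyC.
have HY : forall Z, sep e' Z (y |: S) C -> sep e Z A C.
  move=> Z hZ.
  have hdel'' : forall z w, e z w -> ~~ e' z w -> ((z == y) && (w == x)) || ((z == x) && (w == y)).
    by move=> z w hzw hn; rewrite orbC; apply: hdel'.
  apply: sep_sym => //.
  exact: (F2 se' hsub hdel'' (sep_sym se' hS) hyC hxA (sep_sym se' hZ)).
have cX : #|x |: S| = k /\ x \notin S.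
  have hk : k <= #|x |: S|.
    apply: hs; apply: HX => P _ _; case: P => [|a p] //= hl.
    by exists (last a p) => //; apply: mem_last.
  have hx : x \notin S.
    apply/negP => hx; move: hk; rewrite cardsU1 hx /= => hk.
    by move: (leq_ltn_trans hk hlt); rewrite ltnn.
  by split => //; apply/eqP; rewrite eqn_leq hk andbT cardsU1 hx add1n.
have cY : #|y |: S| = k /\ y \notin S.
  have hk : k <= #|y |: S|.
    apply: hs; apply: HY => P _ hP _; case: P hP => [|a p] //= hl.
    by exists a => //; rewrite mem_head.
  have hy : y \notin S.
    apply/negP => hy; move: hk; rewrite cardsU1 hy /= => hk.
    by move: (leq_ltn_trans hk hlt); rewrite ltnn.
  by split => //; apply/eqP; rewrite eqn_leq hk andbT cardsU1 hy add1n.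
case: cX cY => [cX hxS] [cY hyS].
have [Q1' [hQ1' hd1']] : disjoint_paths e' k A (x |: S).
  by apply: IH => // Z hZ; apply: hs; apply: HX.
have [Q2' [hQ2' hd2']] : disjoint_paths e' k C (y |: S).
  apply: IH => // Z hZ; apply: hs; apply: HY; exact: sep_sym.
have HQ1 : forall i, exists s, exists q z, [/\ s = rcons q z,
    gpath e' (rcons q z), starts_in (rcons q z) A, (z \in x |: S) &&
    all (fun w => w \notin x |: S) q & {subset rcons q z <= Q1' i}].
  move=> i; case/and3P: (hQ1' i) => g s t.
  have [q [z [g' s' hz hall hsb]]] := trunc g s t.
  by exists (rcons q z), q, z; rewrite hz hall.
have [Q1 hQ1] := fchoice HQ1.
have HR : forall i, exists s, exists q z, [/\ s = rcons q z,
    gpath e' (rcons q z), starts_in (rcons q z) C, (z \in y |: S) &&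
    all (fun w => w \notin y |: S) q & {subset rcons q z <= Q2' i}].
  move=> i; case/and3P: (hQ2' i) => g s t.
  have [q [z [g' s' hz hall hsb]]] := trunc g s t.
  by exists (rcons q z), q, z; rewrite hz hall.
have [R hR] := fchoice HR.
have hSX : S \subset x |: S by apply/subsetP => w hw; rewrite in_setU1 hw orbT.
have hSY : S \subset y |: S by apply/subsetP => w hw; rewrite in_setU1 hw orbT.
apply: (combine (x := x) (y := y) (Q1 := Q1) (Q2 := fun j => rev (R j)) hxS hyS exy cY).
- by move=> i; have [q [z [-> _ _ /andP [hz hall] _]]] := hQ1 i; exists q, z.
- move=> i; have [q [z [-> g s _ _]]] := hQ1 i; split => //; exact: (gpath_sub hsub g).
- move=> i i' hne w; have [q [z [-> _ _ _ hsb]]] := hQ1 i;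
  have [q' [z' [-> _ _ _ hsb']]] := hQ1 i' => hw; apply/negP => hw'.
  by move: (hd1' i i' hne w (hsb w hw)); rewrite (hsb' w hw').
- move=> j; have [q [z [-> _ _ /andP [hz hall] _]]] := hR j; exists (rev q), z.
  by rewrite rev_rcons all_rev.
- move=> j; have [q [z [-> g s _ _]]] := hR j; split; last by rewrite ends_rev.
  by apply: gpath_rev => //; apply: (gpath_sub hsub g).
- move=> j j' hne w; have [q [z [-> _ _ _ hsb]]] := hR j;
  have [q' [z' [-> _ _ _ hsb']]] := hR j'; rewrite !mem_rev => hw; apply/negP => hw'.
  by move: (hd2' j j' hne w (hsb w hw)); rewrite (hsb' w hw').
- move=> i j w; have [q [z [-> g s /andP [_ hall] _]]] := hQ1 i;
  have [q' [z' [-> g' s' /andP [_ hall'] _]]] := hR j; rewrite mem_rev => hw hw' hwS.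
  apply: (Reach_disj se' hS (trunc_reach hSX g s hall hw hwS)).
  exact: (trunc_reach hSY g' s' hall' hw' hwS).
Qed.

End Menger4.

Section Chain.
Variables (T : finType) (e : rel T) (m : nat) (C D : nat -> {set T}).

Definition Cx i := if i < m then C i else setT.
Definition Dx i := if i == 0 then setT else D i.-1.
Definition bg i := Cx i :&: Dx i.
Definition chainB := mkseq bg m.+1.

Hypothesis s1 : forall k, k < m -> forall x y, e x y ->
  (x \in C k) && (y \in C k) || (x \in D k) && (y \in D k).
Hypothesis s2 : forall k, k < m -> forall v, (v \in C k) || (v \in D k).
Hypothesis s3 : forall k, k.+1 < m -> (C k \subset C k.+1) && (D k.+1 \subset D k).

Lemma size_chainB : size chainB = m.+1.
Proof. by rewrite size_mkseq. Qed.

Lemma bag_chainB i : i <= m -> bag chainB i = bg i.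
Proof. by move=> hi; rewrite /bag nth_mkseq. Qed.

Lemma C_mono a b : a <= b -> b < m -> C a \subset C b.
Proof.
move=> hab; elim: b hab => [|b IH]; first by rewrite leqn0 => /eqP ->.
rewrite leq_eqVlt => /orP [/eqP -> //|]; rewrite ltnS => hab hb.
apply: subset_trans (IH hab (ltnW hb)) _; by case/andP: (s3 hb).
Qed.

Lemma D_anti a b : a <= b -> b < m -> D b \subset D a.
Proof.
move=> hab; elim: b hab => [|b IH]; first by rewrite leqn0 => /eqP ->.
rewrite leq_eqVlt => /orP [/eqP -> //|]; rewrite ltnS => hab hb.
apply: subset_trans _ (IH hab (ltnW hb)); by case/andP: (s3 hb).
Qed.

Lemma Cx_mono i j : i <= j -> Cx i \subset Cx j.
Proof.
move=> hij; rewrite /Cx; case: (ltnP j m) => hj; last by rewrite subsetT.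
by rewrite (leq_ltn_trans hij hj); apply: C_mono.
Qed.

Lemma Dx_anti i j : i <= j -> j <= m -> Dx j \subset Dx i.
Proof.
move=> hij hjm; rewrite /Dx; case: i hij => [|i] hij; first by rewrite subsetT.
case: j hij hjm => // j hij hjm /=; exact: D_anti.
Qed.

Lemma chain_find (x y : T) : (forall k, k < m -> (x \in C k) && (y \in C k) || (x \in D k) && (y \in D k)) ->
  exists2 i, i <= m & [&& x \in bg i & y \in bg i].
Proof.
move=> h.
suff H : forall j, j <= m -> (x \in Cx j) && (y \in Cx j) ->
  exists2 i, i <= j & [&& x \in bg i & y \in bg i].
  by apply: H => //; rewrite /Cx ltnn !inE.
elim=> [|j IH] hj hxy.
  by exists 0 => //; rewrite /bg !inE /Dx /=; rewrite /Cx in hxy *; case: ifP hxy => _ /andP [-> ->].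
have hjm : j < m by [].
case hC : ((x \in C j) && (y \in C j)).
  have hCj : (x \in Cx j) && (y \in Cx j) by rewrite /Cx hjm.
  have [i hi hb] := IH (ltnW hj) hCj.
  by exists i => //; apply: leq_trans hi _.
exists j.+1 => //; rewrite /bg !inE /Dx /=.
move: (h j hjm); rewrite hC /= => /andP [-> ->]; by case/andP: hxy => -> ->.
Qed.

Lemma chain_pd : 0 < m.+1 -> is_path_decomposition e chainB.
Proof.
move=> _; split; first by rewrite size_chainB.
split.
  move=> x y hxy; have [i hi hb] := chain_find (fun k hk => s1 hk hxy).
  by exists i; rewrite ?size_chainB ?ltnS ?bag_chainB.
split.
  move=> v.
  have hv : forall k, k < m -> (v \in C k) && (v \in C k) || (v \in D k) && (v \in D k).
    by move=> k hk; rewrite !andbb; apply: s2.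
  have [i hi hb] := chain_find hv.
  by exists i; rewrite ?size_chainB ?ltnS ?bag_chainB //; case/andP: hb.
move=> v i j k hij hjk; rewrite size_chainB ltnS => hkm.
have hjm : j <= m by apply: leq_trans hjk hkm.
have him : i <= m by apply: leq_trans hij hjm.
rewrite !bag_chainB //.
rewrite /bg !inE => /andP [hi _] /andP [_ hk]; apply/andP; split.
  exact: (subsetP (Cx_mono hij)).
exact: (subsetP (Dx_anti hjk hkm)).
Qed.

Lemma chain_cap i : i < m -> bag chainB i :&: bag chainB i.+1 = C i :&: D i.
Proof.
move=> him; rewrite !bag_chainB ?(ltnW him) //; apply/setP => v.
have h1 := subsetP (Cx_mono (leqnSn i)) v.
have h2 := subsetP (Dx_anti (leqnSn i) him) v.
have e1 : Cx i = C i by rewrite /Cx him.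
have e2 : Dx i.+1 = D i by [].
rewrite /bg !inE; rewrite e1 e2 in h1 h2 *.
case: (v \in C i) h1; case: (v \in D i) h2; case: (v \in Cx i.+1); case: (v \in Dx i) => //=;
  by [move=> _ /(_ isT) | move=> /(_ isT) | move=> h /(_ isT)].
Qed.

End Chain.

Lemma proper_crit (T : finType) (e : rel T) (B : seq {set T}) : is_path_decomposition e B ->
  (forall i, i.+1 < size B -> ~~ (bag B i \subset bag B i.+1) && ~~ (bag B i.+1 \subset bag B i)) ->
  proper_pd B.
Proof.
move=> [_ [_ [_ hcvx]]] h i j hi hj hne; apply/negP => hsub.
case: (ltngtP i j) => hij; last by apply: hne.
- have hi1 : i.+1 < size B by apply: leq_ltn_trans hij hj.
  case/andP: (h i hi1) => /negP h1 _; apply: h1; apply/subsetP => v hv.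
  exact: (hcvx v i i.+1 j (leqnSn i) hij hj hv (subsetP hsub v hv)).
- case: i hi hsub hij hne => // i hi hsub hij _.
  case/andP: (h i hi) => _ /negP h1; apply: h1; apply/subsetP => v hv.
  exact: (hcvx v j i i.+1 (hij) (leqnSn i) hi (subsetP hsub v hv) hv).
Qed.

Section PDB.
Variables (T : finType) (e : rel T) (B : seq {set T}).
Hypothesis hpd : is_path_decomposition e B.

Lemma cov v : exists2 i, i < size B & v \in bag B i.
Proof. by case: hpd => [_ [_ [h _]]]; apply: h. Qed.

Lemma cvx v i j k : i <= j -> j <= k -> k < size B -> v \in bag B i -> v \in bag B k -> v \in bag B j.
Proof. by case: hpd => [_ [_ [_ h]]]; apply: h. Qed.

Lemma edg x y : e x y -> exists2 i, i < size B & (x \in bag B i) && (y \in bag B i).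
Proof. by case: hpd => [_ [h _]]; apply: h. Qed.

Definition Lc i := [set v | [exists j : 'I_(size B), (j < i) && (v \in bag B j)]].
Definition Rc i := [set v | [exists j : 'I_(size B), (i <= j) && (v \in bag B j)]].

Lemma LcP v i : reflect (exists j, [/\ j < i, j < size B & v \in bag B j]) (v \in Lc i).
Proof.
rewrite inE; apply: (iffP existsP) => [[j /andP [h1 h2]] | [j [h1 h2 h3]]].
  by exists j.
by exists (Ordinal h2); rewrite /= h1 h3.
Qed.

Lemma RcP v i : reflect (exists j, [/\ i <= j, j < size B & v \in bag B j]) (v \in Rc i).
Proof.
rewrite inE; apply: (iffP existsP) => [[j /andP [h1 h2]] | [j [h1 h2 h3]]].
  by exists j.
by exists (Ordinal h2); rewrite /= h1 h3.
Qed.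

Lemma LR_cover v i : (v \in Lc i) || (v \in Rc i).
Proof.
have [j hj hv] := cov v; case: (ltnP j i) => hji.
  by apply/orP; left; apply/LcP; exists j.
by apply/orP; right; apply/RcP; exists j.
Qed.

Lemma LR_edge x y i : e x y -> (x \in Lc i) && (y \in Lc i) || (x \in Rc i) && (y \in Rc i).
Proof.
move=> hxy; have [j hj /andP [hx hy]] := edg hxy; case: (ltnP j i) => hji.
  by apply/orP; left; apply/andP; split; apply/LcP; exists j.
by apply/orP; right; apply/andP; split; apply/RcP; exists j.
Qed.

Lemma LR_bags v i : v \in Lc i -> v \in Rc i ->
  [/\ 0 < i, i < size B, v \in bag B i.-1 & v \in bag B i].
Proof.
move=> /LcP [j1 [h1 h1' hv1]] /RcP [j2 [h2 h2' hv2]].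
have hi0 : 0 < i by apply: leq_ltn_trans (leq0n j1) h1.
split => //; first by apply: leq_ltn_trans h2 h2'.
  apply: (cvx (i := j1) (k := j2)) => //; first by rewrite -ltnS prednK.
  by apply: leq_trans h2; apply: leq_pred.
by apply: (cvx (i := j1) (k := j2)) => //; apply: ltnW.
Qed.

Lemma Lc_mono i i' : i <= i' -> Lc i \subset Lc i'.
Proof.
move=> h; apply/subsetP => v /LcP [j [h1 h2 h3]]; apply/LcP; exists j; split => //.
exact: leq_trans h1 h.
Qed.

Lemma Rc_anti i i' : i <= i' -> Rc i' \subset Rc i.
Proof.
move=> h; apply/subsetP => v /RcP [j [h1 h2 h3]]; apply/RcP; exists j; split => //.
exact: leq_trans h h1.
Qed.

Lemma bag_Lc j i : j < size B -> j < i -> bag B j \subset Lc i.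
Proof. by move=> h1 h2; apply/subsetP => v hv; apply/LcP; exists j. Qed.

Lemma bag_Rc j i : i <= j -> j < size B -> bag B j \subset Rc i.
Proof. by move=> h1 h2; apply/subsetP => v hv; apply/RcP; exists j. Qed.

Lemma LcRc_bag j : Lc j.+1 :&: Rc j \subset bag B j.
Proof.
apply/subsetP => v; rewrite inE => /andP [/LcP [j1 [h1 _ hv1]] /RcP [j2 [h2 h2' hv2]]].
exact: (cvx (i := j1) (k := j2)).
Qed.

Lemma bag_Rc_next j : j.+1 < size B -> bag B j \subset Rc j.+1 -> bag B j \subset bag B j.+1.
Proof.
move=> hj hs; apply/subsetP => v hv; have /RcP [j2 [h2 h2' hv2]] := subsetP hs v hv.
exact: (cvx (i := j) (k := j2)).
Qed.

Lemma bag_Lc_prev j : 0 < j -> j < size B -> bag B j \subset Lc j -> bag B j \subset bag B j.-1.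
Proof.
move=> hj0 hj hs; apply/subsetP => v hv; have /LcP [j1 [h1 h1' hv1]] := subsetP hs v hv.
apply: (cvx (i := j1) (k := j)) => //; first by rewrite -ltnS prednK.
exact: leq_pred.
Qed.

Lemma path_cross (r : rel T) (L R : {set T}) x p :
  (forall a b, r a b -> (a \in L) && (b \in L) || (a \in R) && (b \in R)) ->
  (forall v, (v \in L) || (v \in R)) ->
  x \in L -> last x p \in R -> path r x p -> exists2 v, v \in x :: p & v \in L :&: R.
Proof.
move=> hr hcov; elim: p x => [|y p IH] x /=.
  by move=> hx hxR _; exists x; [rewrite mem_head | rewrite inE hx hxR].
move=> hx hl /andP [hxy hp].
case hxR : (x \in R); first by exists x; [rewrite mem_head | rewrite inE hx hxR].
have hy : y \in L.
  by move: (hr x y hxy); rewrite hxR /= orbF => /andP [].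
have [v hv1 hv2] := IH y hy hl hp; exists v => //; by rewrite inE hv1 orbT.
Qed.

Lemma card_Ub s t w : (forall j, s <= j -> j < t -> #|bag B j| <= w) ->
  #|[set v | [exists j : 'I_(size B), (s <= j < t) && (v \in bag B j)]]| <= (t - s) * w.
Proof.
elim: t => [|t IH] h.
  rewrite (_ : [set v | _] = set0) ?cards0 //; apply/setP => v; rewrite !inE.
  by apply/existsP => [[j /andP [/andP [_ ]]]]; rewrite ltn0.
case: (ltnP t s) => hts.
  rewrite (_ : [set v | _] = set0) ?cards0 //; apply/setP => v; rewrite !inE.
  apply/existsP => [[j /andP [/andP [h1 h2] _]]].
  by move: (leq_ltn_trans h1 h2); rewrite ltnS leqNgt hts.
have hsub : [set v | [exists j : 'I_(size B), (s <= j < t.+1) && (v \in bag B j)]] \subset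
  [set v | [exists j : 'I_(size B), (s <= j < t) && (v \in bag B j)]] :|: bag B t.
  apply/subsetP => v; rewrite !inE => /existsP [j /andP [/andP [h1 h2] hv]].
  move: h2; rewrite ltnS leq_eqVlt => /orP [/eqP hjt | hjt].
    by rewrite -hjt hv orbT.
  by apply/orP; left; apply/existsP; exists j; rewrite h1 hjt hv.
apply: leq_trans (subset_leq_card hsub) _; apply: leq_trans (leq_card_setU _ _) _.
rewrite subSn // mulSn addnC; apply: leq_add; first exact: h.
by apply: IH => j h1 h2; apply: h => //; apply: ltnW.
Qed.

Lemma card_LcRc s t w : s < t -> (forall j, s <= j -> j < t -> #|bag B j| <= w) ->
  #|Lc t :&: Rc s| <= (t - s) * w.
Proof.
move=> hst h; apply: leq_trans (card_Ub h); apply: subset_leq_card; apply/subsetP => v.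
rewrite in_setI => /andP [/LcP [j1 [h1 h1' hv1]] /RcP [j2 [h2 h2' hv2]]].
case: (leqP s j1) => hsj1.
  by rewrite inE; apply/existsP; exists (Ordinal h1'); rewrite /= hsj1 h1 hv1.
have hs : s < size B by apply: leq_ltn_trans h2 h2'.
rewrite inE; apply/existsP; exists (Ordinal hs); rewrite /= leqnn hst /=.
by apply: (cvx (i := j1) (k := j2)) => //; apply: ltnW.
Qed.

Section SecProper.
Variables (m : nat) (C D : nat -> {set T}).
Hypothesis s1 : forall k, k < m -> forall x y, e x y ->
  (x \in C k) && (y \in C k) || (x \in D k) && (y \in D k).
Hypothesis s2 : forall k, k < m -> forall v, (v \in C k) || (v \in D k).
Hypothesis s3 : forall k, k.+1 < m -> (C k \subset C k.+1) && (D k.+1 \subset D k).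

Lemma chain_proper (g : nat -> nat) : proper_pd B ->
  (forall i, i <= m -> g i < size B) ->
  (forall i, i <= m -> bag B (g i) \subset bg m C D i) ->
  (forall i, i < m -> g i < g i.+1) ->
  (forall i, i < m -> C i :&: D i \subset Rc (g i).+1 :&: Lc (g i.+1)) ->
  proper_pd (chainB m C D).
Proof.
move=> hprop hg1 hg2 hg3 hg4.
apply: (proper_crit (e := e)); first exact: (chain_pd s1 s2 s3) (ltn0Sn m).
move=> i; rewrite size_chainB ltnS => him.
have hcap := chain_cap s3 him.
have hb1 := hg2 i (ltnW him); have hb2 := hg2 i.+1 him.
rewrite -(bag_chainB C D (ltnW him)) in hb1; rewrite -(bag_chainB C D him) in hb2.
have hX := hg4 i him.
apply/andP; split; apply/negP => hsub.
- have h : bag B (g i) \subset C i :&: D i.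
    rewrite -hcap; apply: subset_trans hb1 _; by rewrite subsetI subxx hsub.
  have hgi1 : (g i).+1 < size B by apply: leq_ltn_trans (hg3 i him) (hg1 _ him).
  have h' : bag B (g i) \subset Rc (g i).+1.
    by apply: subset_trans h (subset_trans hX _); apply: subsetIl.
  have := bag_Rc_next hgi1 h'; apply/negP.
  have hne : g i <> (g i).+1 by lia.
  exact: (hprop (g i) (g i).+1 (ltnW hgi1) hgi1 hne).
- have h : bag B (g i.+1) \subset C i :&: D i.
    rewrite -hcap; apply: subset_trans hb2 _; by rewrite subsetI subxx hsub andbT.
  have hpos : 0 < g i.+1 by apply: leq_ltn_trans (leq0n _) (hg3 i him).
  have h' : bag B (g i.+1) \subset Lc (g i.+1).
    by apply: subset_trans h (subset_trans hX _); apply: subsetIr.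
  have := bag_Lc_prev hpos (hg1 _ him) h'; apply/negP.
  have hne : g i.+1 <> (g i.+1).-1.
    by lia.
  exact: (hprop (g i.+1) (g i.+1).-1 (hg1 _ him) (leq_ltn_trans (leq_pred _) (hg1 _ him)) hne).
Qed.

End SecProper.

End PDB.

Section Cases.
Variables (T : finType) (e : rel T) (B : seq {set T}) (a w : nat).
Hypothesis hsym : symmetric e.
Hypothesis hpd : is_path_decomposition e B.
Hypothesis hprop : proper_pd B.
Hypothesis hwid : interior_width_le B w.
Hypothesis hadh : adhesion_le B a.

Definition Ad j := Lc B j :&: Rc B j.
Definition Wn s t := Lc B t :&: Rc B s.
Definition eW s t : rel T := [rel x y | [&& e x y, x \in Wn s t & y \in Wn s t]].

Lemma eW_sym s t : symmetric (eW s t).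
Proof. by move=> x y; rewrite /eW /= hsym; case: (x \in _); case: (y \in _). Qed.

Lemma Ad_card j : 0 < j -> j < size B -> #|Ad j| <= a.
Proof.
move=> h0 h1; have hj : j.-1.+1 = j by rewrite prednK.
have h := hadh (i := j.-1); rewrite hj in h; apply: leq_trans (h h1).
apply: subset_leq_card; apply/subsetP => v; rewrite /Ad in_setI => /andP [hl hr].
have [_ _ h3 h4] := LR_bags hpd hl hr; by rewrite in_setI h3.
Qed.

Lemma Ad_sep s t j : s <= j -> j <= t -> sep (eW s t) (Ad j) (Ad s) (Ad t).
Proof.
move=> hsj hjt [|x p] //= /andP [hp _] hx hl.
have hx' : x \in Lc B j.
  by move: hx; rewrite /Ad in_setI => /andP [+ _]; apply: (subsetP (Lc_mono B hsj)).
have hl' : last x p \in Rc B j.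
  by move: hl; rewrite /Ad in_setI => /andP [_]; apply: (subsetP (Rc_anti B hjt)).
have he : forall a b, eW s t a b -> (a \in Lc B j) && (b \in Lc B j) || (a \in Rc B j) && (b \in Rc B j).
  by move=> a' b'; rewrite /eW /= => /and3P [h _ _]; exact: (LR_edge hpd j h).
have [v hv1 hv2] := path_cross he (fun v => LR_cover hpd v j) hx' hl' hp.
by exists v.
Qed.

Lemma case1 s t : 0 < s -> s < t -> t < size B ->
  (forall X, sep (eW s t) X (Ad s) (Ad t) -> a <= #|X|) ->
  exists B', [/\ is_path_decomposition e B', proper_pd B', p_linked e B' a,
     interior_width_le B' w & size B' = (t - s).+2].
Proof.
move=> hs0 hst htN hconn.
pose m := (t - s).+1.
pose C k := Lc B (s + k); pose D k := Rc B (s + k).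
have s1 : forall k, k < m -> forall x y, e x y ->
    (x \in C k) && (y \in C k) || (x \in D k) && (y \in D k).
  by move=> k _ x y hxy; exact: (LR_edge hpd _ hxy).
have s2 : forall k, k < m -> forall v, (v \in C k) || (v \in D k).
  by move=> k _ v; exact: (LR_cover hpd v _).
have s3 : forall k, k.+1 < m -> (C k \subset C k.+1) && (D k.+1 \subset D k).
  by move=> k _; rewrite Lc_mono ?Rc_anti // addnS.
have hCD : forall k, C k :&: D k = Ad (s + k) by [].
have Hpd : is_path_decomposition e (chainB m C D) by exact: chain_pd.
have Hpr : proper_pd (chainB m C D).
  apply: (chain_proper hpd s1 s2 s3 (g := fun i => (s + i).-1)) => //.
      by move=> i hi; rewrite /m in hi; lia.
    move=> i hi; rewrite /bg /Cx /Dx subsetI; apply/andP; split.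
      case: ifP => hi'; last exact: subsetT.
      rewrite /C; apply: bag_Lc; rewrite /m in hi; lia.
    case: ifP => hi0; first exact: subsetT.
    rewrite /D; apply: bag_Rc; move/negbT: hi0; rewrite /m in hi; lia.
    by move=> i hi; lia.
  move=> i hi; rewrite hCD /Ad setIC.
  have -> : (s + i).-1.+1 = s + i by lia.
  by have -> : (s + i.+1).-1 = s + i by lia.
have Hl1 : forall i, 0 < i -> i < size (chainB m C D) ->
    #|bag (chainB m C D) i.-1 :&: bag (chainB m C D) i| = a.
  move=> i hi0; rewrite size_chainB => hi.
  have -> : i = i.-1.+1 by lia.
  rewrite chain_cap //; last by lia.
  rewrite hCD; apply/eqP; rewrite eqn_leq Ad_card ?andTb; try lia.
  apply: hconn; apply: Ad_sep; lia.
have Hl2 : disjoint_paths e a (Rs (chainB m C D)) (Lt (chainB m C D)).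
  rewrite /Rs /Lt size_chainB.
  have hm : 0 < m by [].
  have h1 : (1 < m.+1) = true by rewrite /m; lia.
  rewrite h1.
  rewrite (chain_cap s3 hm).
  have -> : m.+1.-2 = m.-1 by [].
  have -> : m.+1.-1 = m.-1.+1 by lia.
  rewrite (chain_cap s3) ?hCD; last by lia.
  have -> : s + m.-1 = t by rewrite /m; lia.
  rewrite addn0.
  have [Q [hQ hd]] := menger (eW_sym s t) hconn.
  have hsr : subrel (eW s t) e by move=> x y; rewrite /eW /= => /and3P [].
  exists Q; split => // i; case/and3P: (hQ i) => g st en; rewrite st en !andbT.
  exact: (gpath_sub hsr g).
have Hw : interior_width_le (chainB m C D) w.
  move=> i hi0; rewrite size_chainB /= => hi.
  rewrite bag_chainB; last by lia.
  rewrite /bg /Cx /Dx (_ : i < m = true); last by lia.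
  rewrite (_ : (i == 0) = false); last by lia.
  apply: leq_trans (hwid (i := (s + i).-1) _ _); try lia.
  apply: subset_leq_card; apply: subset_trans (LcRc_bag hpd (s + i).-1).
  rewrite /C /D (_ : (s + i).-1.+1 = s + i); last by lia.
  rewrite (_ : s + i.-1 = (s + i).-1) //; lia.
exists (chainB m C D); split => //; by rewrite size_chainB.
Qed.

Section Window.
Variables (s t : nat) (X : {set T}).
Hypothesis hs0 : 0 < s.
Hypothesis hst : s < t.
Hypothesis htN : t < size B.
Hypothesis hX : sep (eW s t) X (Ad s) (Ad t).
Hypothesis hXW : X \subset Wn s t.

Definition Yw := Reach (eW s t) X (Ad t).
Definition Zw := (Rc B t :\: Ad t) :|: Yw.

Lemma Ad_W_s : Ad s \subset Wn s t.
Proof. by apply: setSI; apply: Lc_mono; apply: ltnW. Qed.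

Lemma Ad_W_t : Ad t \subset Wn s t.
Proof. by apply: setIS; apply: Rc_anti; apply: ltnW. Qed.

Lemma Y_W : Yw \subset Wn s t.
Proof.
apply/subsetP => z; rewrite inE => /existsP [c /and3P [hc _ /connectP [p hp ->]]].
have hcW : c \in Wn s t by apply: (subsetP Ad_W_t).
elim: p c hp hcW {hc} => [|y p IH] c //= /andP [hcy hp] _.
apply: IH hp _; by move: hcy; rewrite /rZ /eW /= => /and3P [/and3P [_ _ ->]].
Qed.

Lemma Y_notX z : z \in Yw -> z \notin X.
Proof. exact: Reach_notin. Qed.

Lemma Y_As z : z \in Yw -> z \notin Ad s.
Proof.
move=> hz; apply/negP => hzs.
apply: (Reach_disj (eW_sym s t) (sep_sym (eW_sym s t) hX) hz).
by apply: Reach_self => //; apply: Y_notX.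
Qed.

Lemma Z_Lc z : z \in Zw -> z \notin Lc B s.
Proof.
rewrite /Zw in_setU in_setD => /orP [/andP [hA hR] | hY]; apply/negP => hL.
  move/negP: hA; apply; rewrite /Ad in_setI hR andbT.
  by apply: (subsetP (Lc_mono B (ltnW hst))).
move: (Y_As hY); rewrite /Ad in_setI hL /=; move/negP; apply.
by move: (subsetP Y_W z hY); rewrite /Wn in_setI => /andP [].
Qed.

Lemma Z_Rc z : z \in Zw -> z \in Rc B s.
Proof. by move=> hz; move: (LR_cover hpd z s); rewrite (negbTE (Z_Lc hz)). Qed.

Lemma Z_X z : z \in Zw -> z \notin X.
Proof.
rewrite /Zw in_setU in_setD => /orP [/andP [hA hR] | hY]; last exact: Y_notX.
apply/negP => hzX; move/negP: hA; apply; rewrite /Ad in_setI hR andbT.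
by move: (subsetP hXW z hzX); rewrite /Wn in_setI => /andP [].
Qed.

Lemma Rc_D : Rc B t \subset Zw :|: X.
Proof.
apply/subsetP => v hv; rewrite !in_setU in_setD hv andbT.
case hA : (v \in Ad t) => //=.
case hvX : (v \in X); rewrite ?orbT //.
by rewrite /Yw Reach_self ?orbT // hvX.
Qed.

Lemma notZ_Lc v : v \notin Zw -> v \in Lc B t.
Proof.
move=> hv; case/orP: (LR_cover hpd v t) => // hR.
move: hv; rewrite /Zw in_setU in_setD hR andbT negb_or negbK => /andP [].
by rewrite /Ad in_setI => /andP [].
Qed.

Lemma Z_edge x y : e x y -> x \in Zw -> y \notin X -> y \in Zw.
Proof.
move=> hxy; rewrite {1}/Zw in_setU in_setD => /orP [/andP [hA hR] | hY] hyX.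
  have hxL : x \notin Lc B t.
    by apply/negP => hL; move/negP: hA; apply; rewrite /Ad in_setI hL hR.
  have hyR : y \in Rc B t.
    by move: (LR_edge hpd t hxy); rewrite (negbTE hxL) /= => /andP [].
  by move: (subsetP Rc_D y hyR); rewrite in_setU (negbTE hyX) orbF.
have hxW := subsetP Y_W x hY.
have hxL : x \notin Lc B s.
  apply/negP => hL; move: (Y_As hY); rewrite /Ad in_setI hL /=.
  by move: hxW; rewrite /Wn in_setI => /andP [_ ->].
have hyRs : y \in Rc B s.
  by move: (LR_edge hpd s hxy); rewrite (negbTE hxL) /= => /andP [].
case hyRt : (y \in Rc B t).
  by move: (subsetP Rc_D y hyRt); rewrite in_setU (negbTE hyX) orbF.
have hyL : y \in Lc B t by move: (LR_cover hpd y t); rewrite hyRt orbF.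
have hyW : y \in Wn s t by rewrite /Wn in_setI hyL hyRs.
rewrite /Zw in_setU; apply/orP; right.
apply: (Reach_step hY); rewrite /rZ /eW /= hxy hxW hyW hyX andbT /=.
by rewrite andbT; exact: Y_notX.
Qed.

End Window.

Lemma pathW s t x p v : path (eW s t) x p -> x \in Wn s t -> v \in x :: p -> v \in Wn s t.
Proof.
elim: p x => [|y p IH] x /=; first by move=> _ hx; rewrite inE => /eqP ->.
move=> /andP [hxy hp] hx; rewrite inE => /orP [/eqP -> // | hv].
apply: (IH y hp) => //; by move: hxy; rewrite /eW /= => /and3P [_ _ ->].
Qed.

Lemma sepW s t X A C : sep (eW s t) X A C -> A \subset Wn s t ->
  sep (eW s t) (X :&: Wn s t) A C.
Proof.
move=> hX hA P gP sP eP; have [v hv hvX] := hX P gP sP eP; exists v => //.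
rewrite in_setI hvX /=.
case: P gP sP eP hv => [|x p] // /andP [hp _] hx _ hv.
exact: (pathW hp (subsetP hA x hx) hv).
Qed.

Lemma case2 (M L : nat) (Xf : nat -> {set T}) : 0 < M -> 0 < L -> M * L.+1 < size B ->
  (forall k, k < M -> sep (eW (k * L.+1 + 1) (k.+1 * L.+1)) (Xf k) (Ad (k * L.+1 + 1)) (Ad (k.+1 * L.+1))
      /\ #|Xf k| < a) ->
  exists B', [/\ is_path_decomposition e B', proper_pd B',
     interior_width_le B' (L.*2.+1 * w.+1), adhesion_le B' a.-1 & size B' = M.+1].
Proof.
move=> hM0 hL0 hMN hXf.
pose sk k := k * L.+1 + 1. pose tk k := k.+1 * L.+1.
have hk1 : forall k, k < M -> [/\ 0 < sk k, sk k < tk k & tk k < size B].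
  move=> k hk; rewrite /sk /tk; split; try nia.
have hsk1 : forall k, sk k.+1 = (tk k).+1 by move=> k; rewrite /sk /tk; nia.
pose X' k := Xf k :&: Wn (sk k) (tk k).
have hX' : forall k, k < M -> sep (eW (sk k) (tk k)) (X' k) (Ad (sk k)) (Ad (tk k)).
  move=> k hk; have [_ hst _] := hk1 k hk; apply: sepW; first by case: (hXf k hk).
  exact: Ad_W_s.
have hXW : forall k, X' k \subset Wn (sk k) (tk k) by move=> k; apply: subsetIr.
pose Z k := Zw (sk k) (tk k) (X' k).
pose C k := ~: Z k. pose D k := Z k :|: X' k.
have s1 : forall k, k < M -> forall x y, e x y ->
    (x \in C k) && (y \in C k) || (x \in D k) && (y \in D k).
  move=> k hk x y hxy; have [_ hst _] := hk1 k hk.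
  rewrite /C /D !(in_setC _ (Z k)) !(in_setU _ (Z k) (X' k)).
  have hyx : e y x by rewrite hsym.
  case hxZ : (x \in Z k); case hyZ : (y \in Z k) => //=.
    case hyX : (y \in X' k) => //.
    by have := Z_edge hst (hX' k hk) hxy hxZ (negbT hyX); rewrite hyZ.
  case hxX : (x \in X' k) => //.
  by have := Z_edge hst (hX' k hk) hyx hyZ (negbT hxX); rewrite hxZ.
have s2 : forall k, k < M -> forall v, (v \in C k) || (v \in D k).
  by move=> k _ v; rewrite /C /D (in_setC _ (Z k)) (in_setU _ (Z k) (X' k)); case: (v \in Z k).
have hZsub : forall k, k.+1 < M -> Z k.+1 \subset Z k.
  move=> k hk; have [_ hst1 _] := hk1 k.+1 hk; have [_ _ htN] := hk1 k (ltnW hk).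
  apply/subsetP => z hz.
  have hzL := Z_Lc hst1 (hX' _ hk) hz; have hzR := Z_Rc hst1 (hX' _ hk) hz.
  rewrite /Z /Zw in_setU in_setD; apply/orP; left; apply/andP; split.
    apply/negP; rewrite /Ad in_setI => /andP [hL _]; move/negP: hzL; apply.
    by apply: (subsetP (Lc_mono B _)) hL; rewrite hsk1.
  by apply: (subsetP (Rc_anti B _)) hzR; rewrite hsk1.
have s3 : forall k, k.+1 < M -> (C k \subset C k.+1) && (D k.+1 \subset D k).
  move=> k hk; apply/andP; split; first by rewrite /C setCS; apply: hZsub.
  rewrite /D subUset; apply/andP; split.
    by apply: subset_trans (hZsub k hk) _; apply: subsetUl.
  apply: subset_trans (hXW _) _; apply: subset_trans (subsetIr _ _) _.
  apply: subset_trans (Rc_D (sk k) (tk k) (X' k)); apply: Rc_anti; rewrite hsk1; exact: leqnSn.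
have hCD : forall k, k < M -> C k :&: D k \subset X' k.
  move=> k hk; apply/subsetP => v; rewrite /C /D in_setI (in_setC _ (Z k)) (in_setU _ (Z k) (X' k)).
  by case: (v \in Z k).
have Hpd : is_path_decomposition e (chainB M C D) by exact: chain_pd.
have Hpr : proper_pd (chainB M C D).
  apply: (chain_proper hpd s1 s2 s3 (g := fun i => i * L.+1)) => //.
        move=> i hi; apply: leq_ltn_trans hMN; exact: leq_mul.
      move=> i hi; rewrite /bg /Cx /Dx subsetI; apply/andP; split.
        case: ifP => hi'; last exact: subsetT.
        have [_ hst _] := hk1 i hi'.
        apply/subsetP => v hv; rewrite /C in_setC; apply/negP => hvZ.
        move/negP: (Z_Lc hst (hX' i hi') hvZ); apply.
        apply: (subsetP (bag_Lc _ _)) hv; last by rewrite /sk addn1.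
        by apply: leq_ltn_trans hMN; apply: leq_mul.
      case: ifP => hi0; first exact: subsetT.
      case: i hi hi0 => // i hi _.
      apply: subset_trans (Rc_D (sk i) (tk i) (X' i)).
      apply: bag_Rc => //; apply: leq_ltn_trans hMN; exact: leq_mul.
    by move=> i hi; rewrite ltn_pmul2r.
  move=> i hi; apply: subset_trans (hCD i hi) _; apply: subset_trans (hXW i) _.
  by rewrite /Wn setIC /sk /tk addn1.
have Hw : interior_width_le (chainB M C D) (L.*2.+1 * w.+1).
  move=> i hi0; rewrite size_chainB /= => hi.
  rewrite bag_chainB; last by apply: ltnW.
  rewrite /bg /Cx /Dx hi (_ : (i == 0) = false); last by lia.
  case: i hi0 hi => // i _ hi /=.
  apply: leq_trans (leqnSn _); apply: leq_trans (_ : #|Lc B (tk i.+1) :&: Rc B (sk i)| <= _).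
    apply: subset_leq_card; apply: setISS.
      by apply/subsetP => v; rewrite /C in_setC => hv; apply: notZ_Lc hv.
    have [_ hst _] := hk1 i (ltnW hi).
    rewrite /D subUset; apply/andP; split.
      by apply/subsetP => z hz; apply: (Z_Rc hst (hX' _ (ltnW hi)) hz).
    by apply: subset_trans (hXW i) _; apply: subsetIr.
  have [h1 _ _] := hk1 i (ltnW hi); have [_ _ h3] := hk1 i.+1 hi.
  apply: leq_trans (card_LcRc hpd (s := sk i) (t := tk i.+1) (w := w.+1) _ _) _.
      by rewrite /sk /tk; nia.
    move=> j hj1 hj2; apply: hwid; first by apply: leq_trans h1 hj1.
    by rewrite -ltnS prednK; [apply: leq_trans h3 | apply: leq_ltn_trans h3].
  by rewrite leq_mul2r (_ : tk i.+1 - sk i = L.*2.+1) ?leqnn ?orbT //; rewrite /tk /sk; nia.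
have Ha : adhesion_le (chainB M C D) a.-1.
  move=> i; rewrite size_chainB ltnS => hi.
  rewrite (chain_cap s3 hi); apply: leq_trans (subset_leq_card (hCD i hi)) _.
  apply: leq_trans (subset_leq_card (subsetIl _ _)) _.
  by case: (hXf i hi) => _ h; rewrite -ltnS prednK //; apply: leq_ltn_trans h.
by exists (chainB M C D); split => //; rewrite size_chainB.
Qed.

End Cases.

Lemma dich (T : finType) (e : rel T) (B : seq {set T}) (a w : nat) :
  symmetric e -> is_path_decomposition e B -> proper_pd B ->
  interior_width_le B w -> adhesion_le B a ->
  forall M L, 0 < M -> 0 < L -> M * L.+1 < size B ->
  (exists B', [/\ is_path_decomposition e B', proper_pd B', p_linked e B' a,
     interior_width_le B' w & size B' = L.+2]) \/
  (0 < a /\ exists B', [/\ is_path_decomposition e B', proper_pd B',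
     interior_width_le B' (L.*2.+1 * w.+1), adhesion_le B' a.-1 & size B' = M.+1]).
Proof.
move=> hsym hpd hprop hwid hadh M L hM hL hMN.
case: (classic (exists k, k < M /\ forall X, sep (eW e B (k * L.+1 + 1) (k.+1 * L.+1)) X
    (Ad B (k * L.+1 + 1)) (Ad B (k.+1 * L.+1)) -> a <= #|X|)) => [[k [hk hc]] | hn].
  left; have [B' [h1 h2 h3 h4 h5]] := case1 hsym hpd hprop hwid hadh (s := k * L.+1 + 1) (t := k.+1 * L.+1)
    (ltac:(lia)) (ltac:(nia)) (ltac:(have := leq_mul hk (leqnn L.+1); lia)) hc.
  exists B'; split => //; rewrite h5; congr _.+2; nia.
have hex : forall k, exists X : {set T}, k < M -> sep (eW e B (k * L.+1 + 1) (k.+1 * L.+1)) X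
    (Ad B (k * L.+1 + 1)) (Ad B (k.+1 * L.+1)) /\ #|X| < a.
  move=> k; case: (ltnP k M) => hk; last by exists set0.
  have : ~ (forall X, sep (eW e B (k * L.+1 + 1) (k.+1 * L.+1)) X
    (Ad B (k * L.+1 + 1)) (Ad B (k.+1 * L.+1)) -> a <= #|X|) by move=> h; apply: hn; exists k.
  move=> hnot; have [X hX0] := not_all_ex_not _ _ hnot.
  have [hX hlt] := imply_to_and _ _ hX0.
  exists X => _; split => //; by rewrite ltnNge; apply/negP.
pose Xf k := proj1_sig (constructive_indefinite_description _ (hex k)).
have hXf : forall k, k < M -> sep (eW e B (k * L.+1 + 1) (k.+1 * L.+1)) (Xf k)
    (Ad B (k * L.+1 + 1)) (Ad B (k.+1 * L.+1)) /\ #|Xf k| < a.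
  by move=> k; rewrite /Xf; case: (constructive_indefinite_description _ (hex k)).
right; split; first by case: (hXf 0 hM) => _ h; apply: leq_ltn_trans h.
exact: (case2 hsym hpd hprop hwid hM hL hMN hXf).
Qed.

Theorem lemma3p6 (a w : nat) (f : nat -> nat) (f_mono : {homo f : m n / m <= n}) :
  exists w0 n0 : nat,
    forall (T : finType) (e : rel T), simple_graph e ->
    forall B : seq {set T},
      is_path_decomposition e B -> proper_pd B ->
      interior_width_le B w -> adhesion_le B a -> n0 <= size B ->
      exists w' p : nat, [/\ w' <= w0, p <= a &
        exists B' : seq {set T},
          [/\ is_path_decomposition e B', proper_pd B', p_linked e B' p,
              interior_width_le B' w' & f w' <= size B']].
Proof.
elim: a w => [|a IH] w.
  pose L := (f w).+1.
  exists w, (1 * L.+1).+1 => T e [hsym _] B hpd hprop hwid hadh hN.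
  case: (dich hsym hpd hprop hwid hadh (M := 1) (L := L) isT isT hN) => [[B' [h1 h2 h3 h4 h5]] | [//]].
  exists w, 0; split => //; exists B'; split => //; rewrite h5 /L; lia.
pose L := (f w).+1.
have [w0' [n0' H']] := IH (L.*2.+1 * w.+1).
exists (maxn w w0'), (n0'.+1 * L.+1).+1 => T e hsg B hpd hprop hwid hadh hN.
case: (hsg) => hsym _.
case: (dich hsym hpd hprop hwid hadh (M := n0'.+1) (L := L) isT isT hN) => [[B' [h1 h2 h3 h4 h5]] | [_ [B' [h1 h2 h3 h4 h5]]]].
  exists w, a.+1; split => //; first exact: leq_maxl.
  exists B'; split => //; rewrite h5 /L; lia.
have [w' [p [hw' hp [B'' hB'']]]] := H' T e hsg B' h1 h2 h3 h4 (ltac:(rewrite h5; lia)).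
exists w', p; split => //; last by exists B''.
  by apply: leq_trans hw' (leq_maxr _ _).
by apply: leq_trans hp _.
Qed.
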